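(* For any $n\in\mathbb{N}$, $A>0$ and $\lambda\in[-1,1]$, there exists $f\in C[-1,1]$, nonnegative on $[-1,1]$, such that every algebraic polynomial $P_n$ of degree $\le n$ which is nonnegative on $[-1,1]$ and satisfies $P_n(\lambda)=f(\lambda)$ obeys $$\|f-P_n\|>A\,\omega_3(f,1).$$
   Context: $\|\cdot\|$ is the sup norm on $[-1,1]$; $\omega_3(f,t)$ is the third modulus of smoothness of $f$ on $[-1,1]$. *)

(* Defs.v *)
From HB Require Import structures.
From mathcomp Require Import all_boot all_order all_algebra.
From mathcomp Require Import all_classical all_reals all_analysis.
Set Implicit Arguments. Unset Strict Implicit. Unset Printing Implicit Defensive.
Import Order.TTheory GRing.Theory Num.Theory.
Import numFieldNormedType.Exports.
Local Open Scope classical_set_scope.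
Local Open Scope ring_scope.

Definition supnorm11 (R : realType) (g : R -> R) : R :=
  sup [set `|g x| | x in `[-1, 1]].

Definition diff3 (R : realType) (f : R -> R) (h x : R) : R :=
  f (x + 3%:R * h) - 3%:R * f (x + 2%:R * h) + 3%:R * f (x + h) - f x.

Definition omega3 (R : realType) (f : R -> R) (t : R) : R :=
  sup [set `|diff3 f hx.1 hx.2| | hx in
        [set hx : R * R | 0 < hx.1 <= t /\ -1 <= hx.2 /\ hx.2 + 3%:R * hx.1 <= 1]].

(* Main.v *)
Require Import Defs.
From HB Require Import structures.
From mathcomp Require Import all_boot all_order all_algebra.
From mathcomp Require Import all_classical all_reals all_analysis.
From mathcomp Require Import ring lra zify.
Import Order.TTheory GRing.Theory Num.Theory.
Import numFieldNormedType.Exports.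
Local Open Scope classical_set_scope.
Local Open Scope ring_scope.

Lemma factor_size (R : realType) (p : {poly R}) (a : R) (n : nat) :
  (size p <= n.+1)%N -> root p a -> exists q, p = q * ('X - a%:P) /\ (size q <= n)%N.
Proof.
move=> hs /factor_theorem [q hq]; exists q; split => //.
have [->|nz] := eqVneq q 0; first by rewrite size_poly0.
move: hs; rewrite hq size_Mmonic ?monicXsubC // size_XsubC addn2 /=.
move=> h; rewrite -ltnS; exact: h.
Qed.

Lemma poly_bound (R : realType) (p : {poly R}) :
  exists B, forall x : R, `|x| <= 1 -> `|p.[x]| <= B.
Proof.
exists (\sum_(i < size p) `|p`_i|) => x hx.
rewrite horner_coef; apply: le_trans (ler_norm_sum _ _ _) _.
apply: ler_sum => i _; rewrite normrM normrX.
apply: ler_piMr; first exact: normr_ge0.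
exact: exprn_ile1.
Qed.

Lemma interp_bound (R : realType) (lam eps : R) (n : nat) :
  0 < eps -> forall y : nat -> R,
  (forall i j, (i < n)%N -> (j < n)%N -> i != j -> eps <= `|y i - y j|) ->
  exists C : R, 0 <= C /\ forall (T : {poly R}) (M : R), (size T <= n)%N ->
    (forall i, (i < n)%N -> `|T.[y i]| <= M) -> `|T.[lam]| <= C * M.
Proof.
move=> he; elim: n => [|n IH] y hy.
  exists 0; split => // T M hs _.
  by move: hs; rewrite leqn0 size_poly_eq0 => /eqP ->; rewrite horner0 normr0 mul0r.
have [C [C0 HC]] := IH (fun i => y i.+1) (fun i j hi hj hij => hy i.+1 j.+1 hi hj hij).
exists (1 + `|lam - y 0%N| * C * 2 / eps); split.
  apply: addr_ge0 => //; apply: divr_ge0; last exact: ltW.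
  by apply: mulr_ge0 => //; apply: mulr_ge0.
move=> T M hs hM.
have M0 : 0 <= M by apply: le_trans (hM 0%N isT); exact: normr_ge0.
have hr : root (T - (T.[y 0%N])%:P) (y 0%N) by rewrite /root !hornerE subrr.
have hs' : (size (T - (T.[y 0%N])%:P)%R <= n.+1)%N.
  apply: (leq_trans (size_polyD _ _)); rewrite size_polyN geq_max hs /=.
  by apply: (leq_trans (size_polyC_leq1 _)).
have [T1 [hT1 sT1]] := factor_size _ _ _ _ hs' hr.
have eT : forall x, T.[x] = T.[y 0%N] + T1.[x] * (x - y 0%N).
  move=> x; have := congr1 (fun p => p.[x]) hT1 => /=.
  rewrite !hornerE => <-; ring.
have H1 : `|T1.[lam]| <= C * (2 * M / eps).
  apply: HC => // i hi.
  have hne := hy i.+1 0%N hi isT isT.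
  have hpos : 0 < `|y i.+1 - y 0%N| by apply: lt_le_trans hne.
  have e1 : T1.[y i.+1] = (T.[y i.+1] - T.[y 0%N]) / (y i.+1 - y 0%N).
    rewrite eT; field.
    by apply/eqP => h; move: hpos; rewrite h normr0 ltxx.
  rewrite e1 normrM normfV ler_pdivrMr // .
  apply: le_trans (ler_normB _ _) _.
  apply: le_trans (lerD (hM i.+1 hi) (hM 0%N isT)) _.
  have h1 : 1 <= `|y i.+1 - y 0%N| / eps by rewrite ler_pdivlMr // mul1r.
  have -> : 2 * M / eps * `|y i.+1 - y 0%N| = (M + M) * (`|y i.+1 - y 0%N| / eps) by ring.
  apply: ler_peMr => //; lra.
rewrite eT; apply: le_trans (ler_normD _ _) _.
rewrite normrM.
have : `|T1.[lam]| * `|lam - y 0%N| <= C * (2 * M / eps) * `|lam - y 0%N|.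
  by apply: ler_wpM2r => //; exact: normr_ge0.
have := hM 0%N isT.
move=> h1 h2.
have -> : (1 + `|lam - y 0%N| * C * 2 / eps) * M = M + C * (2 * M / eps) * `|lam - y 0%N|.
  by rewrite /=; field; apply/eqP => h; move: he; rewrite h ltxx.
exact: lerD.
Qed.

Lemma limit_nonneg (R : realType) (v B : R) : 0 <= B ->
  (forall t, 0 < t <= 1 -> -(t*B) <= v) -> 0 <= v.
Proof.
move=> B0 H; rewrite leNgt; apply/negP => hv.
set t := Num.min 1 (-v/(B+1)).
have t0 : 0 < t by rewrite lt_min ltr01 /= divr_gt0 //; lra.
have t1 : t <= 1 by rewrite ge_min lexx.
have t2 : t <= -v/(B+1) by rewrite ge_min lexx orbT.
rewrite ler_pdivlMr in t2; last lra.
have := H t; rewrite t0 t1 => /(_ isT).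
rewrite mulrDr mulr1 in t2.
lra.
Qed.

Lemma itv11 (R : realType) (x : R) : (x \in `[-1, 1]) = (`|x| <= 1).
Proof. by rewrite in_itv /= ler_norml. Qed.

Theorem lemma3p3 (R : realType) (n : nat) (A lambda : R) :
  0 < A -> lambda \in `[-1, 1] ->
  exists f : R -> R,
    {within `[-1, 1], continuous f} /\
    (forall x, x \in `[-1, 1] -> 0 <= f x) /\
    (forall P : {poly R}, (size P <= n.+1)%N ->
       (forall x, x \in `[-1, 1] -> 0 <= P.[x]) ->
       P.[lambda] = f lambda ->
       supnorm11 (fun x => f x - P.[x]) > A * omega3 f 1).
Proof.
move=> hA; move: lambda => lam hlam.
rewrite itv11 in hlam.
set s : R := if lam <= 0 then 1 else -1.
have ss : s * s = 1 by rewrite /s; case: ifP => _; ring.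
have hs1 : forall t, 0 <= t <= 1 -> `|lam + s * t| <= 1.
  move=> t /andP [t0 t1]; move: hlam; rewrite /s !ler_norml; case: (lerP lam 0) => h /andP [h1 h2]; apply/andP; split; lra.
set N := n.+2.
set eps : R := 1 / (N.+1)%:R.
have Npos : 0 < (N.+1)%:R :> R by rewrite ltr0n.
have heps : 0 < eps by rewrite /eps divr_gt0.
set y := fun i : nat => lam + s * ((i.+1)%:R / (N.+1)%:R).
have hy : forall i j, (i < N)%N -> (j < N)%N -> i != j -> eps <= `|y i - y j|.
  move=> i j _ _ hij.
  have -> : y i - y j = s * ((i%:R - j%:R) / (N.+1)%:R).
    rewrite /y; ring.
  rewrite normrM (_ : `|s| = 1); last by rewrite /s; case: ifP => _; rewrite ?normrN normr1.
  rewrite mul1r normrM normfV (gtr0_norm Npos) /eps mul1r -[X in X <= _]mul1r ler_pM2r ?invr_gt0 //.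
  have [hl|hl|he] := ltngtP i j.
  - rewrite ler0_norm; last by rewrite subr_le0 ler_nat ltnW.
    rewrite opprB -natrB ?ler1n ?subn_gt0 // ltnW //.
  - rewrite ger0_norm; last by rewrite subr_ge0 ler_nat ltnW.
    rewrite -natrB ?ler1n ?subn_gt0 // ltnW //.
  - by rewrite he eqxx in hij.
have [C [C0 HC]] := @interp_bound R lam eps N heps y hy.
set K := C * (N.+1)%:R * (8 * A + 1).
have K0 : 0 <= K by rewrite /K; apply: mulr_ge0; [apply: mulr_ge0 => //; exact: ltW| lra].
set d := 1 / (K + 1).
have d0 : 0 < d by rewrite /d divr_gt0 //; lra.
have Kd : K * d < 1 by rewrite /d mulrA mulr1 ltr_pdivrMr; lra.
set lam' := lam + 2 * d * s.
set p0 := fun x : R => (x - lam) * (x - lam').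
set f := fun x : R => Num.max 0 (p0 x).
have p0lb : forall x, - (d ^+ 2) <= p0 x.
  move=> x; have -> : p0 x = (x - lam - d * s) ^+ 2 - d ^+ 2 * (s * s).
    by rewrite /p0 /lam'; ring.
  rewrite ss mulr1 lerBrDr addNr; exact: sqr_ge0.
have gb : forall x, 0 <= f x - p0 x <= d ^+ 2.
  move=> x; rewrite /f; have [h|h] := leP 0 (p0 x).
    by rewrite subrr lexx sqr_ge0.
  have := p0lb x; lra.
exists f; split.
  apply: continuous_subspaceT => x.
  apply: (@continuous_max R R (fun _ : R => 0) p0); first exact: cst_continuous.
  apply: continuousM; apply: continuousB => //; exact: cst_continuous.
split.
  by move=> x _; rewrite /f le_max lexx.
move=> P hsP hPpos hPl.
have f0 : f lam = 0 by rewrite /f /p0 subrr mul0r maxxx.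
have Pl0 : P.[lam] = 0 by rewrite hPl f0.
have hom : omega3 f 1 <= 8 * d ^+ 2.
  rewrite /omega3; apply: ge_sup.
    have h3 : (3%:R : R) * 3^-1 = 1 by rewrite mulfV // pnatr_eq0.
    have h3p : (0 : R) < 3^-1 by rewrite invr_gt0 ltr0n.
    have h3l : (3^-1 : R) <= 1 by rewrite invf_le1 ?ler1n ?ltr0n.
    exists (`|diff3 f (3^-1) (-1)|); exists (3^-1, -1) => //=.
    split; first by rewrite h3p h3l.
    split; first by rewrite lexx.
    rewrite h3; lra.
  move=> z [[h x] /= [hh [hx1 hx2]] <-].
  have -> : diff3 f h x = (f (x + 3%:R * h) - p0 (x + 3%:R * h)) - 3%:R * (f (x + 2%:R * h) - p0 (x + 2%:R * h))
     + 3%:R * (f (x + h) - p0 (x + h)) - (f x - p0 x).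
    by rewrite /diff3 /p0; ring.
  move: (gb (x + 3%:R * h)) (gb (x + 2%:R * h)) (gb (x + h)) (gb x).
  move=> /andP[a1 a2] /andP[b1 b2] /andP[c1 c2] /andP[e1 e2].
  rewrite ler_norml; apply/andP; split; lra.
rewrite ltNge; apply/negP => hle.
set Q0 : {poly R} := ('X - lam%:P) * ('X - lam'%:P).
have hQ0 : forall x, p0 x = Q0.[x] by move=> x; rewrite /Q0 /p0 !hornerE.
have hub : forall x, `|x| <= 1 -> `|f x - P.[x]| <= supnorm11 (fun x => f x - P.[x]).
  move=> x hx; apply: ub_le_sup; last first.
    by exists x => //; have : x \in `[-1, 1] by rewrite itv11.
  have [B1 hB1] := poly_bound _ P.
  have [B2 hB2] := poly_bound _ Q0.
  exists (B2 + B1) => z [u hu <-].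
  have hu' : `|u| <= 1 by rewrite -itv11; exact: hu.
  apply: le_trans (ler_normB _ _) _; apply: lerD; last exact: hB1.
  apply: le_trans (hB2 _ hu'); rewrite -hQ0 /f.
  by have [h1|h1] := leP 0 (p0 u); [rewrite ger0_norm | rewrite normr0].
have hR : forall x, `|x| <= 1 -> `|(P - Q0).[x]| <= (8 * A + 1) * d ^+ 2.
  move=> x hx.
  have e : (P - Q0).[x] = - (f x - P.[x]) + (f x - p0 x) by rewrite hornerD hornerN hQ0; ring.
  rewrite e; apply: le_trans (ler_normD _ _) _.
  rewrite normrN.
  have h1 := le_trans (hub x hx) hle.
  have h2 : A * omega3 f 1 <= A * (8 * d ^+ 2) by apply: ler_wpM2l => //; exact: ltW.
  move: (gb x) => /andP [g1 g2].
  rewrite (ger0_norm g1).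
  have -> : (8 * A + 1) * d ^+ 2 = A * (8 * d ^+ 2) + d ^+ 2 by ring.
  apply: lerD => //; exact: le_trans h1 h2.
have rP : root P lam by rewrite /root Pl0.
have [S [hS sS]] := factor_size _ _ _ _ hsP rP.
have sgn : 0 <= s * S.[lam].
  have hsz : (size (S - (S.[lam])%:P)%R <= n.+1)%N.
    apply: (leq_trans (size_polyD _ _)); rewrite size_polyN geq_max.
    apply/andP; split; first exact: (leq_trans sS (leqnSn n)).
    by apply: (leq_trans (size_polyC_leq1 _)).
  have rS : root (S - (S.[lam])%:P) lam by rewrite /root !hornerE subrr.
  have [U [hU _]] := factor_size _ _ _ _ hsz rS.
  have [B hB] := poly_bound _ U.
  apply: (@limit_nonneg R _ `|B|); first exact: normr_ge0.
  move=> t /andP [t0 t1].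
  set z := lam + s * t.
  have hz : `|z| <= 1 by apply: hs1; rewrite (ltW t0) t1.
  have Pz : 0 <= P.[z] by apply: hPpos; rewrite itv11.
  have ePz : P.[z] = (s * S.[z]) * t by rewrite hS !hornerE /z; ring.
  have eSz : S.[z] = S.[lam] + U.[z] * (s * t).
    have := congr1 (fun p => p.[z]) hU => /=.
    move=> h; rewrite !hornerE in h.
    have e2 : z - lam = s * t by rewrite /z; ring.
    rewrite e2 in h; rewrite -h; ring.
  have sSz : 0 <= s * S.[z] by rewrite -(pmulr_lge0 _ t0) -ePz.
  have e : s * S.[lam] = s * S.[z] - (s * s) * (t * U.[z]) by rewrite eSz; ring.
  rewrite ss mul1r in e.
  have hUB : t * U.[z] <= t * `|B|.
    apply: ler_wpM2l; first exact: ltW.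
    apply: le_trans (ler_norm _) _; apply: le_trans (hB _ hz) _; exact: ler_norm.
  lra.
set T := S - ('X - lam'%:P).
have hT : P - Q0 = T * ('X - lam%:P) by rewrite hS /Q0 /T; ring.
have sT : (size T <= N)%N.
  apply: (leq_trans (size_polyD _ _)); rewrite size_polyN size_XsubC geq_max.
  apply/andP; split; first exact: (leq_trans sS (leq_trans (leqnSn n) (leqnSn n.+1))).
  by [].
have hyb : forall i, (i < N)%N -> `|T.[y i]| <= (N.+1)%:R * ((8 * A + 1) * d ^+ 2).
  move=> i hi.
  have ti0 : (0 : R) < (i.+1)%:R / (N.+1)%:R by rewrite divr_gt0 ?ltr0n.
  have ti1 : (i.+1)%:R / (N.+1)%:R <= 1 :> R.
    by rewrite ler_pdivrMr // mul1r ler_nat ltnW.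
  have hyi : `|y i| <= 1 by apply: hs1; rewrite (ltW ti0) ti1.
  have eR : (P - Q0).[y i] = T.[y i] * (s * ((i.+1)%:R / (N.+1)%:R)).
    by rewrite hT hornerM hornerXsubC /y; ring.
  have ns : `|s| = 1 by rewrite /s; case: ifP => _; rewrite ?normrN normr1.
  have := hR _ hyi; rewrite eR normrM normrM ns mul1r (gtr0_norm ti0).
  rewrite -ler_pdivlMr // => h.
  apply: le_trans h _.
  have c0 : 0 <= (8 * A + 1) * d ^+ 2 by apply: mulr_ge0; [lra | exact: sqr_ge0].
  rewrite invf_div [X in _ <= X]mulrC; apply: ler_wpM2l => //.
  by rewrite ler_pdivrMr ?ltr0n // ler_peMr ?ler0n // ler1n.
have hTl := HC T _ sT hyb.
have eTl : T.[lam] = S.[lam] + 2 * d * s by rewrite /T hornerD hornerN hornerXsubC /lam'; ring.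
have ns : `|s| = 1 by rewrite /s; case: ifP => _; rewrite ?normrN normr1.
have h1 : s * T.[lam] <= `|T.[lam]|.
  by apply: le_trans (ler_norm _) _; rewrite normrM ns mul1r.
have h2 : s * T.[lam] = s * S.[lam] + 2 * d.
  rewrite eTl.
  transitivity (s * S.[lam] + 2 * d * (s * s)); first ring.
  by rewrite ss mulr1.
have h3 : C * ((N.+1)%:R * ((8 * A + 1) * d ^+ 2)) = (K * d) * d by rewrite /K; ring.
have h4 : (K * d) * d < 1 * d by rewrite ltr_pM2r.
lra.
Qed.
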